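(* Let $a_2,a_3$ be integers with $1<a_2<a_3$, $A=\{1,a_2,a_3\}$, and let $h$ be a positive integer with $X(h)\ge a_3$. Then $X(h+1)=X(h)+a_3$.
   Context: An integer $x$ has an $h$-representation if $x=c_3a_3+c_2a_2+c_1$ with integers $c_1,c_2,c_3\ge0$ and $c_1+c_2+c_3\le h$. $X(h)$ (the $h$-range) is one less than the smallest positive integer with no $h$-representation. *)

(* Defs.v *)
From Stdlib Require Import Arith Lia.

Definition hrep (a2 a3 h x : nat) : Prop :=
  exists c1 c2 c3 : nat, c1 + c2 + c3 <= h /\ x = c3 * a3 + c2 * a2 + c1.

(* is_hrange a2 a3 h r  <->  X(h) = r, i.e. r+1 is the smallest positive
   integer with no h-representation. *)
Definition is_hrange (a2 a3 h r : nat) : Prop :=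
  (forall x, 1 <= x <= r -> hrep a2 a3 h x) /\ ~ hrep a2 a3 h (r + 1).

(* Main.v *)
Require Import Defs.
From Stdlib Require Import Arith.
From Stdlib Require Import Lia ZArith List.
Import ListNotations.
Lemma zpos_of_mul (a w : Z) : (0 < a)%Z -> (0 < a * w)%Z -> (0 < w)%Z.
Proof. intros. nia. Qed.
Lemma znonneg_of_mul (a w : Z) : (0 < a)%Z -> (0 <= a * w)%Z -> (0 <= w)%Z.
Proof. intros. nia. Qed.
Lemma zlt_of_mul (a x y : Z) : (0 < a)%Z -> (a * x < a * y)%Z -> (x < y)%Z.
Proof. intros. nia. Qed.
Lemma nat_le_q (a2 A q s rK : nat) : a2*A + rK < a2*q + s -> s < a2 -> A <= q.
Proof. intros. nia. Qed.
Lemma zmul_mono (x y z : Z) : (0 <= x)%Z -> (y <= z)%Z -> (x * y <= x * z)%Z.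
Proof. intros. nia. Qed.

Lemma zmul_ge (a t v : Z) : (0 < a)%Z -> v = (t * a)%Z -> (0 < v)%Z -> (a <= v)%Z.
Proof. intros Ha -> Hv. destruct (Z_le_gt_dec t 0) as [Ht|Ht]; nia. Qed.
Lemma zmul_range (a t v : Z) : (0 < a)%Z -> v = (t * a)%Z -> (-a < v < a)%Z -> v = 0%Z.
Proof. intros Ha -> Hv. destruct (Z_le_gt_dec t 0) as [Ht|Ht]; [destruct (Z_le_gt_dec t (-1))|]; nia. Qed.

Lemma NoDup_list_prod {A B : Type} (l : list A) (l' : list B) :
  NoDup l -> NoDup l' -> NoDup (list_prod l l').
Proof.
  intros H1 H2. induction H1 as [|x t Hx Ht IH]; simpl; [constructor|].
  apply NoDup_app.
  - apply NoDup_map_NoDup_ForallPairs; [|exact H2].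
    intros a b _ _ E. now inversion E.
  - exact IH.
  - intros [u v] Hin Hin2. apply in_map_iff in Hin as [y [E _]]. inversion E; subst.
    apply in_prod_iff in Hin2 as [Hx' _]. contradiction.
Qed.

Section Count.
Variables (a2 s q c1 K ks : nat) (rho : nat -> nat).
Hypothesis Ha2 : 0 < a2.
Hypothesis Hs : s < a2.
Hypothesis Hq : 1 <= q.
Hypothesis Hks : 1 <= ks <= K.
Hypothesis Hrng : forall k, 1 <= k <= K -> rho ks <= rho k < a2.
Hypothesis Hdel : c1 + q + 1 <= rho ks.
Hypothesis HR : forall i j, 1 <= i -> 1 <= j -> i + j <= K ->
      exists t : Z, (Z.of_nat (rho i) + Z.of_nat (rho j) - Z.of_nat (rho (i + j)) - Z.of_nat c1 = t * Z.of_nat a2)%Z.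
Hypothesis HC : forall i j, 1 <= i -> 1 <= j -> i + j = S K ->
      exists t : Z, (Z.of_nat (rho i) + Z.of_nat (rho j) + Z.of_nat s - Z.of_nat (rho K) - Z.of_nat c1 = t * Z.of_nat a2)%Z.

Lemma F2 m : 1 <= m -> m + ks <= K -> rho (m + ks) = rho m + (rho ks - c1).
Proof.
  intros H1 H2. destruct (HR m ks H1 (proj1 Hks) H2) as [t Ht].
  pose proof (Hrng m ltac:(lia)). pose proof (Hrng (m+ks) ltac:(lia)). pose proof (Hrng ks ltac:(lia)).
  assert (E := zmul_range (Z.of_nat a2) t _ ltac:(lia) Ht ltac:(lia)). lia.
Qed.

Definition valid (p : nat * nat) := 1 <= fst p <= K /\ (snd p = 0 \/ (ks < fst p /\ 1 <= snd p <= q)).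

Lemma valid_range p : valid p -> rho ks <= rho (fst p) - snd p < a2.
Proof.
  destruct p as [k t]; unfold valid; simpl. intros [Hk [->|[Hk2 Ht]]].
  - pose proof (Hrng k Hk). lia.
  - pose proof (Hrng k Hk). pose proof (F2 (k - ks) ltac:(lia) ltac:(lia)).
    replace (k - ks + ks) with k in * by lia. pose proof (Hrng (k - ks) ltac:(lia)). lia.
Qed.

Lemma pair_ne k t k' t' : valid (k,t) -> valid (k',t') -> k < k' -> rho k - t <> rho k' - t'.
Proof.
  unfold valid; simpl. intros [Hk Ht] [Hk' Ht'] Hlt E.
  pose proof (Hrng k Hk). pose proof (Hrng k' Hk'). pose proof (Hrng ks ltac:(lia)).
  destruct (HR k (k' - k) ltac:(lia) ltac:(lia) ltac:(lia)) as [u Hu].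
  replace (k + (k' - k)) with k' in Hu by lia.
  pose proof (Hrng (k' - k) ltac:(lia)).
  assert (Hq1 : t <= q /\ t' <= q) by lia.
  destruct (le_lt_dec t t') as [Hle|Hgt].
  - (* value rho(k'-k) - c1 - (t' - t) in (0,a2) *)
    assert (E2 := zmul_ge (Z.of_nat a2) u _ ltac:(lia) Hu ltac:(lia)). lia.
  -
    assert (Hkk : ks < k) by lia.
    assert (E2 := zmul_ge (Z.of_nat a2) u _ ltac:(lia) Hu ltac:(lia)).
    pose proof (F2 (k' - k) ltac:(lia) ltac:(lia)).
    pose proof (Hrng (k' - k + ks) ltac:(lia)). lia.
Qed.

Lemma pair_inj p p' : valid p -> valid p' -> rho (fst p) - snd p = rho (fst p') - snd p' -> p = p'.
Proof.
  destruct p as [k t], p' as [k' t']; simpl. intros V V' E.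
  destruct (lt_eq_lt_dec k k') as [[Hlt|Heq]|Hgt].
  - exfalso. exact (pair_ne k t k' t' V V' Hlt E).
  - subst k'. pose proof (valid_range _ V). pose proof (valid_range _ V').
    unfold valid in *; simpl in *. pose proof (Hrng k ltac:(lia)).
    f_equal. lia.
  - exfalso. exact (pair_ne k' t' k t V' V Hgt (eq_sym E)).
Qed.

Lemma C_ne k t : rho K < s -> valid (k,t) -> rho K + a2 - s <> rho k - t.
Proof.
  unfold valid; simpl. intros HK [Hk Ht] E.
  pose proof (Hrng k Hk). pose proof (Hrng K ltac:(lia)). pose proof (Hrng ks ltac:(lia)).
  destruct (HC k (S K - k) ltac:(lia) ltac:(lia) ltac:(lia)) as [u Hu].
  pose proof (Hrng (S K - k) ltac:(lia)).
  destruct Ht as [-> | [Hk2 Ht]].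
  -
    assert (Hu' : (Z.of_nat (rho (S K - k)) - Z.of_nat c1 = (u - 1) * Z.of_nat a2)%Z) by lia.
    assert (E2 := zmul_ge (Z.of_nat a2) _ _ ltac:(lia) Hu' ltac:(lia)). lia.
  - assert (Hu' : (Z.of_nat (rho (S K - k)) - Z.of_nat c1 + Z.of_nat t = (u - 1) * Z.of_nat a2)%Z) by lia.
    assert (E2 := zmul_ge (Z.of_nat a2) _ _ ltac:(lia) Hu' ltac:(lia)).
    pose proof (F2 (S K - k) ltac:(lia) ltac:(lia)).
    pose proof (Hrng (S K - k + ks) ltac:(lia)). lia.
Qed.

Definition idx := map (fun k => (k, 0)) (seq 1 K) ++ list_prod (seq (S ks) (K - ks)) (seq 1 q).
Definition V (p : nat * nat) := rho (fst p) - snd p.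
Definition tl := if rho K <? s then [rho K + a2 - s] else [].
Definition L := map V idx ++ tl.

Lemma idx_valid p : In p idx -> valid p.
Proof.
  unfold idx, valid. intros H. apply in_app_or in H as [H|H].
  - apply in_map_iff in H as [k [<- Hk]]. apply in_seq in Hk. simpl. lia.
  - destruct p as [k t]. apply in_prod_iff in H as [H1 H2]. apply in_seq in H1, H2. simpl. lia.
Qed.

Lemma idx_NoDup : NoDup idx.
Proof.
  unfold idx. apply NoDup_app.
  - apply NoDup_map_NoDup_ForallPairs; [|apply seq_NoDup].
    intros a b _ _ E. now inversion E.
  - apply NoDup_list_prod; apply seq_NoDup.
  - intros [k t] H1 H2. apply in_map_iff in H1 as [k' [E _]]. inversion E; subst.
    apply in_prod_iff in H2 as [_ H2]. apply in_seq in H2. lia.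
Qed.

Lemma L_NoDup : NoDup L.
Proof.
  unfold L. apply NoDup_app.
  - apply NoDup_map_NoDup_ForallPairs; [|apply idx_NoDup].
    intros p p' Hp Hp' E. apply pair_inj; auto using idx_valid.
  - unfold tl. destruct (rho K <? s); repeat constructor; auto.
  - intros v Hv Ht. unfold tl in Ht. destruct (rho K <? s) eqn:Eb; [|contradiction].
    destruct Ht as [Ht|[]]. apply Nat.ltb_lt in Eb.
    apply in_map_iff in Hv as [[k t] [Ev Hp]]. apply idx_valid in Hp.
    apply (C_ne k t Eb Hp). rewrite Ht, <- Ev. reflexivity.
Qed.

Lemma L_incl : incl L (seq (rho ks) (a2 - rho ks)).
Proof.
  intros v Hv. apply in_seq. unfold L in Hv. apply in_app_or in Hv as [Hv|Hv].
  - apply in_map_iff in Hv as [p [<- Hp]]. apply idx_valid in Hp. apply valid_range in Hp.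
    unfold V. lia.
  - unfold tl in Hv. destruct (rho K <? s) eqn:Eb; [|contradiction].
    destruct Hv as [<-|[]]. apply Nat.ltb_lt in Eb. pose proof (Hrng K ltac:(lia)). lia.
Qed.

Lemma L_length : length L = K + (K - ks) * q + (if rho K <? s then 1 else 0).
Proof.
  unfold L, idx, tl. rewrite length_app, length_map, length_app, length_map, length_prod, !length_seq.
  destruct (rho K <? s); simpl; lia.
Qed.

Lemma count_main : K + (K - ks) * q + (if rho K <? s then 1 else 0) <= a2 - rho ks.
Proof.
  rewrite <- L_length. rewrite <- (length_seq (a2 - rho ks) (rho ks)).
  apply NoDup_incl_length; [apply L_NoDup | apply L_incl].
Qed.
End Count.


Lemma exists_min (f : nat -> nat) K : 1 <= K -> exists k, 1 <= k <= K /\ forall j, 1 <= j <= K -> f k <= f j.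
Proof.
  induction K as [|K IH]; intros HK; [lia|].
  destruct (Nat.eq_dec K 0) as [->|HK0].
  - exists 1. split; [lia|]. intros j Hj. replace j with 1 by lia. lia.
  - destruct (IH ltac:(lia)) as [k [Hk Hmin]].
    destruct (le_lt_dec (f k) (f (S K))) as [Hle|Hlt].
    + exists k. split; [lia|]. intros j Hj. destruct (Nat.eq_dec j (S K)) as [->|Hne]; [lia|]. apply Hmin. lia.
    + exists (S K). split; [lia|]. intros j Hj. destruct (Nat.eq_dec j (S K)) as [->|Hne]; [lia|].
      specialize (Hmin j ltac:(lia)). lia.
Qed.

Lemma key (a2 a3 N c1 c2 h : nat) : 1 < a2 -> a2 < a3 -> N = c2 * a2 + c1 -> a3 <= N ->
  c1 + c2 <= h + 1 -> a3 / a2 + a2 - 2 <= h -> hrep a2 a3 h (N - a3).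
Proof.
  intros Ha2 Ha23 HN Ha3N Hc Hh.
  set (q := a3 / a2) in *. set (s := a3 mod a2).
  assert (Ha3 : a3 = a2 * q + s) by (apply Nat.div_mod; lia).
  assert (Hs : s < a2) by (apply Nat.mod_upper_bound; lia).
  assert (Hq : 1 <= q) by (destruct q; [lia|lia]).
  set (K := N / a3).
  assert (HNK : N = a3 * K + N mod a3) by (apply Nat.div_mod; lia).
  assert (HmK : N mod a3 < a3) by (apply Nat.mod_upper_bound; lia).
  assert (HK1 : 1 <= K) by (destruct K; [lia|lia]).
  set (rho := fun k => (N - k * a3) mod a2).
  set (Qk := fun k => (N - k * a3) / a2).
  assert (Hdm : forall k, k <= K -> N - k * a3 = a2 * Qk k + rho k /\ rho k < a2 /\ k * a3 <= N).
  { intros k Hk. split; [apply Nat.div_mod; lia|]. split; [apply Nat.mod_upper_bound; lia|].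
    assert (k * a3 <= K * a3) by (apply Nat.mul_le_mono_r; lia). lia. }
  clearbody rho Qk.
  destruct (exists_min rho K HK1) as [ks [Hks Hmin]].
  destruct (Hdm ks ltac:(lia)) as [Eks [Rks Lks]].
  set (r := rho ks) in *. set (Q := Qk ks) in *.
  exists r, Q, (ks - 1). split.
  2:{ assert ((ks - 1) * a3 + a3 = ks * a3).
      { replace ks with (S (ks - 1)) at 2 by lia. simpl. lia. }
      lia. }
  destruct (Z_le_gt_dec ((Z.of_nat a2 - 1) * Z.of_nat r) ((Z.of_nat a2 - 1) * Z.of_nat c1 + Z.of_nat ks * (Z.of_nat a3 - Z.of_nat a2))) as [Hcase|Hcase].
  - assert (Hz : (Z.of_nat a2 * (Z.of_nat ks + Z.of_nat Q + Z.of_nat r) <= Z.of_nat a2 * (Z.of_nat c1 + Z.of_nat c2))%Z) by lia.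
    apply Z.mul_le_mono_pos_l in Hz; lia.
  - assert (Hrc : c1 < r).
    { destruct (le_lt_dec r c1) as [Hle|Hlt]; [|exact Hlt].
      assert ((Z.of_nat a2 - 1) * Z.of_nat r <= (Z.of_nat a2 - 1) * Z.of_nat c1)%Z
        by (apply zmul_mono; lia). nia. }
    assert (Hksa : ks * a3 = a2 * (ks * q) + ks * s) by (rewrite Ha3; ring).
    set (W := (Z.of_nat c2 - Z.of_nat Q - Z.of_nat ks * Z.of_nat q)%Z).
    assert (HW : (Z.of_nat r - Z.of_nat c1 + Z.of_nat ks * Z.of_nat s = Z.of_nat a2 * W)%Z) by (unfold W; lia).
    assert (HW1 : (0 < W)%Z) by (apply (zpos_of_mul (Z.of_nat a2)); lia).
    assert (Hd1 : (0 < Z.of_nat r - Z.of_nat c1 - Z.of_nat ks * Z.of_nat q + Z.of_nat ks - W)%Z).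
    { apply (zpos_of_mul (Z.of_nat a2)); [lia|]. lia. }
    assert (Hkq : (Z.of_nat q - 1 <= Z.of_nat ks * Z.of_nat q - Z.of_nat ks)%Z).
    { assert (0 <= (Z.of_nat ks - 1) * (Z.of_nat q - 1))%Z by (apply Z.mul_nonneg_nonneg; lia). lia. }
    assert (Hdel : c1 + q + 1 <= r) by lia.
    assert (Hcm := count_main a2 s q c1 K ks rho ltac:(lia) Hs Hq Hks).
    specialize (Hcm ltac:(intros k Hk; split; [apply Hmin; lia | apply (Hdm k ltac:(lia))]) Hdel).
    specialize (Hcm ltac:(intros i j Hi Hj Hij;
      destruct (Hdm i ltac:(lia)) as [Ei [Ri Li]];
      destruct (Hdm j ltac:(lia)) as [Ej [Rj Lj]];
      destruct (Hdm (i+j) ltac:(lia)) as [Eij [Rij Lij]];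
      exists (Z.of_nat (Qk (i+j)%nat) + Z.of_nat c2 - Z.of_nat (Qk i) - Z.of_nat (Qk j))%Z; lia)).
    specialize (Hcm ltac:(intros i j Hi Hj Hij;
      destruct (Hdm i ltac:(lia)) as [Ei [Ri Li]];
      destruct (Hdm j ltac:(lia)) as [Ej [Rj Lj]];
      destruct (Hdm K ltac:(lia)) as [EK [RK LK]];
      assert (Hija : i * a3 + j * a3 = K * a3 + a3) by (rewrite <- Nat.mul_add_distr_r, Hij; ring);
      exists (Z.of_nat (Qk K) + Z.of_nat c2 - Z.of_nat (Qk i) - Z.of_nat (Qk j) - Z.of_nat q)%Z; lia)).
    destruct (Hdm K ltac:(lia)) as [EK [RK LK]].
    set (A := Qk K) in *. set (rK := rho K) in *.
    assert (HKlt : a2 * A + rK < a2 * q + s) by lia.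
    assert (HAq : A <= q) by (apply (nat_le_q a2 A q s rK); lia).
    assert (HrK : r <= rK) by (apply Hmin; lia).
    set (K' := K - ks) in *.
    assert (HKK : K = ks + K') by lia.
    assert (HKa : K * a3 = a2 * (K * q) + K * s) by (rewrite Ha3; ring).
    set (W' := (Z.of_nat Q - Z.of_nat A - Z.of_nat K' * Z.of_nat q)%Z).
    assert (HW' : (Z.of_nat a2 * W' = Z.of_nat K' * Z.of_nat s + Z.of_nat rK - Z.of_nat r)%Z).
    { unfold W'. rewrite HKK in HKa. lia. }
    assert (HW'0 : (0 <= W')%Z) by (apply (znonneg_of_mul (Z.of_nat a2)); lia).
    assert (HW'1 : (W' < Z.of_nat K' + 1)%Z).
    { apply (zlt_of_mul (Z.of_nat a2)); [lia|].
      assert (Z.of_nat K' * Z.of_nat s <= Z.of_nat K' * (Z.of_nat a2 - 1))%Z by (apply zmul_mono; lia).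
      lia. }
    destruct (Nat.ltb_spec rK s) as [Hb|Hb].
    + lia.
    + assert (A <> q) by (intro; subst A; lia). lia.
Qed.

Theorem theorem3 (a2 a3 h r : nat) :
  1 < a2 -> a2 < a3 -> 0 < h ->
  is_hrange a2 a3 h r -> a3 <= r ->
  is_hrange a2 a3 (h + 1) (r + a3).
Proof.
  intros Ha2 Ha23 Hh [Hall Hnot] Hr.
  assert (HH : a3 / a2 + a2 - 2 <= h).
  { set (q := a3 / a2).
    assert (Ha3 : a3 = a2 * q + a3 mod a2) by (apply Nat.div_mod; lia).
    assert (a3 mod a2 < a2) by (apply Nat.mod_upper_bound; lia).
    assert (Hq : 1 <= q) by (destruct q; lia).
    destruct (Hall (q * a2 - 1) ltac:(lia)) as [c1 [c2 [c3 [Hs He]]]].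
    destruct c3 as [|c3]; [|simpl in He; lia].
    assert (Hc2 : c2 < q).
    { destruct (le_lt_dec q c2) as [Hle|Hlt]; [|exact Hlt].
      assert (q * a2 <= c2 * a2) by (apply Nat.mul_le_mono_r; exact Hle). lia. }
    assert (0 <= (Z.of_nat q - 1 - Z.of_nat c2) * (Z.of_nat a2 - 1))%Z by (apply Z.mul_nonneg_nonneg; lia).
    lia. }
  split.
  - intros x [Hx1 Hx2]. destruct (le_lt_dec x r) as [Hle|Hlt].
    + destruct (Hall x (conj Hx1 Hle)) as [c1 [c2 [c3 [Hs He]]]].
      exists c1, c2, c3. split; lia.
    + destruct (Hall (x - a3) ltac:(lia)) as [c1 [c2 [c3 [Hs He]]]].
      exists c1, c2, (S c3). split; [lia|]. simpl. lia.
  - intros [c1 [c2 [c3 [Hs He]]]]. destruct c3 as [|c3].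
    + apply Hnot. simpl in He.
      assert (Hk := key a2 a3 (r + a3 + 1) c1 c2 h Ha2 Ha23 ltac:(lia) ltac:(lia) ltac:(lia) HH).
      replace (r + 1) with (r + a3 + 1 - a3) by lia. exact Hk.
    + apply Hnot. exists c1, c2, c3. split; [lia|]. simpl in He. lia.
Qed.
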